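(* Let $L:\mathbb{R}^d\to\mathbb{R}^{\mathcal{Y}}_+$ be a minimizable loss. If $L$ has a finite representative set $\mathcal{S}\subseteq\mathbb{R}^d$, then $L$ embeds the discrete loss $L|_{\mathcal{S}}$ (the restriction of $L$ to $\mathcal{S}$).
   Context: $\mathcal{Y}$ is a finite label set, $\Delta_{\mathcal{Y}}$ the simplex, $\mathbb{R}^{\mathcal{Y}}_+$ the nonnegative orthant. A loss $L:\mathcal{R}\to\mathbb{R}^{\mathcal{Y}}_+$ is minimizable if $\inf_r\langle p,L(r)\rangle$ is attained for every $p\in\Delta_{\mathcal{Y}}$; then $\mathrm{prop}[L](p)=\arg\min_r\langle p,L(r)\rangle$. $\mathcal{S}$ is representative for $L$ if $\mathrm{prop}[L](p)\cap\mathcal{S}\ne\emptyset$ for all $p$. A loss is discrete if its report set is finite. A minimizable $L:\mathbb{R}^d\to\mathbb{R}^{\mathcal{Y}}_+$ embeds $\ell:\mathcal{R}\to\mathbb{R}^{\mathcal{Y}}_+$ if there exist a representative set $\mathcal{S}'$ for $\ell$ and an injective $\varphi:\mathcal{S}'\to\mathbb{R}^d$ with (i) $L(\varphi(r))=\ell(r)$ for $r\in\mathcal{S}'$ and (ii) $r\in\mathrm{prop}[\ell](p)\iff\varphi(r)\in\mathrm{prop}[L](p)$ for all $p$, $r\in\mathcal{S}'$. *)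

(* Defs.v *)
From HB Require Import structures.
From mathcomp Require Import all_boot all_order all_algebra.
From mathcomp Require Import boolp classical_sets functions cardinality reals.
Set Implicit Arguments. Unset Strict Implicit. Unset Printing Implicit Defensive.
Import Order.TTheory GRing.Theory Num.Theory.
Local Open Scope ring_scope.
Local Open Scope classical_set_scope.

Section Losses.
Variables (R : realType) (Y : finType).

Definition simplex (p : Y -> R) : Prop :=
  (forall y, 0 <= p y) /\ \sum_(y : Y) p y = 1.

Definition nonneg_loss (Rep : Type) (L : Rep -> Y -> R) : Prop :=
  forall r y, 0 <= L r y.

Definition expected_loss (Rep : Type) (L : Rep -> Y -> R) (p : Y -> R) (r : Rep) : R :=
  \sum_(y : Y) p y * L r y.

Definition prop (Rep : Type) (L : Rep -> Y -> R) (p : Y -> R) (r : Rep) : Prop :=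
  forall r', expected_loss L p r <= expected_loss L p r'.

Definition minimizable (Rep : Type) (L : Rep -> Y -> R) : Prop :=
  forall p, simplex p -> exists r, prop L p r.

Definition representative (Rep : Type) (L : Rep -> Y -> R) (S : set Rep) : Prop :=
  forall p, simplex p -> exists r, S r /\ prop L p r.

Definition discrete_loss (Rep : Type) (l : Rep -> Y -> R) : Prop :=
  finite_set [set: Rep].

Definition embeds (d : nat) (L : 'rV[R]_d -> Y -> R) (Rep : Type) (l : Rep -> Y -> R) : Prop :=
  minimizable L /\
  exists S' : set Rep, representative l S' /\
  exists phi : Rep -> 'rV[R]_d,
    (forall r1 r2, S' r1 -> S' r2 -> phi r1 = phi r2 -> r1 = r2) /\
    (forall r, S' r -> L (phi r) = l r) /\
    (forall p r, simplex p -> S' r -> (prop l p r <-> prop L p (phi r))).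

Definition restrict_loss (d : nat) (L : 'rV[R]_d -> Y -> R) (S : set 'rV[R]_d)
  : {x : 'rV[R]_d | S x} -> Y -> R :=
  fun x => L (proj1_sig x).

End Losses.
Arguments restrict_loss {R Y d} L S _ _.

(* Main.v *)
Require Import Defs.
From HB Require Import structures.
From mathcomp Require Import all_boot all_order all_algebra.
From mathcomp Require Import boolp classical_sets functions cardinality reals.
Local Open Scope ring_scope.
Local Open Scope classical_set_scope.

Theorem proposition1 (R : realType) (Y : finType) (d : nat)
  (L : 'rV[R]_d -> Y -> R) (S : set 'rV[R]_d) :
  nonneg_loss L -> minimizable L ->
  finite_set S -> representative L S ->
  discrete_loss (restrict_loss L S) /\ embeds L (restrict_loss L S).
Proof.
move=> _ minL FS repS; split.
  rewrite /discrete_loss.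
  have [a0|] := pselect (exists a : {x | S x}, True); last first.
    move=> ne; suff -> : [set: {x | S x}] = set0 by exact: finite_set0.
    by apply/seteqP; split=> // a _; exfalso; apply: ne; exists a.
  case: a0 => a0 _.
  pose f x := match pselect (S x) with left Sx => exist _ x Sx | right _ => a0 end.
  suff -> : [set: {x | S x}] = f @` S by exact: finite_image.
  apply/seteqP; split=> // -[x Sx] _; exists x => //.
  rewrite /f; case: pselect => // Sx'.
  by rewrite (Prop_irrelevance Sx' Sx).
split=> //.
exists setT; split.
  move=> p sp; have [r [Sr pr]] := repS p sp.
  exists (exist _ r Sr); split=> // r'.
  exact: pr.
exists (fun x : {x | S x} => proj1_sig x); split.
  move=> [x Sx] [y Sy] _ _ /= exy; subst y.
  by rewrite (Prop_irrelevance Sx Sy).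
split=> // p [r Sr] sp _; split.
  move=> pr x.
  have [r0 [Sr0 pr0]] := repS p sp.
  apply: Order.POrderTheory.le_trans (pr0 x).
  exact: (pr (exist _ r0 Sr0)).
move=> pr r'; exact: pr.
Qed.
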